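(* Let $A$ be a ring and $I\subset A$ an ideal such that $A_{I\text{-tor}}\cap I=(0)$. Then $A$ is $I$-adically separated (resp. $I$-adically complete) if and only if $A/A_{I\text{-tor}}$ is $I$-adically separated (resp. $I$-adically complete).
   Context: Rings are commutative with $1$. $A_{I\text{-tor}}$ is the ideal of $x\in A$ such that for every $a\in I$ there is $n>0$ with $a^nx=0$. ''$I$-adically complete'' means Hausdorff complete for the $I$-adic topology. *)

(* Defs.v *)
From HB Require Import structures.
From mathcomp Require Import all_boot all_order all_algebra.
Set Implicit Arguments. Unset Strict Implicit. Unset Printing Implicit Defensive.
Import GRing.Theory.
Local Open Scope ring_scope.

Definition is_ideal (A : comPzRingType) (I : A -> Prop) : Prop :=
  [/\ I 0, (forall x y, I x -> I y -> I (x + y)) & (forall a x, I x -> I (a * x))].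

Definition ideal_mul (A : comPzRingType) (J K : A -> Prop) : A -> Prop :=
  fun x => exists s : seq (A * A),
    (forall p, p \in s -> J p.1 /\ K p.2) /\ x = \sum_(p <- s) p.1 * p.2.

Fixpoint ideal_pow (A : comPzRingType) (I : A -> Prop) (n : nat) : A -> Prop :=
  match n with
  | 0 => fun _ => True
  | n'.+1 => ideal_mul I (ideal_pow I n')
  end.

Definition itor (A : comPzRingType) (I : A -> Prop) (x : A) : Prop :=
  forall a, I a -> exists n : nat, (0 < n)%N /\ a ^+ n * x = 0.

Definition adic_separated (A : comPzRingType) (I : A -> Prop) : Prop :=
  forall x, (forall n, ideal_pow I n x) -> x = 0.

Definition adic_cauchy (A : comPzRingType) (I : A -> Prop) (u : nat -> A) : Prop :=
  forall n, exists N, forall m k, (N <= m)%N -> (N <= k)%N -> ideal_pow I n (u m - u k).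

Definition adic_converges (A : comPzRingType) (I : A -> Prop) (u : nat -> A) (l : A) : Prop :=
  forall n, exists N, forall m, (N <= m)%N -> ideal_pow I n (u m - l).

Definition adic_complete (A : comPzRingType) (I : A -> Prop) : Prop :=
  adic_separated I /\
  (forall u : nat -> A, adic_cauchy I u -> exists l, adic_converges I u l).

(* The extended ideal I B = f(I) along a (surjective) ring map f. *)
Definition image_ideal (A B : comPzRingType) (f : A -> B) (I : A -> Prop) : B -> Prop :=
  fun y => exists a, I a /\ f a = y.

(* Main.v *)
Require Import Defs.
From HB Require Import structures.
From mathcomp Require Import all_boot all_order all_algebra.
From Stdlib Require Import IndefiniteDescription.
From mathcomp Require Import ring.
Local Open Scope ring_scope.
Import GRing.Theory.
Set Implicit Arguments.

Lemma fchoice (X Y : Type) (R : X -> Y -> Prop) :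
  (forall x, exists y, R x y) -> exists f, forall x, R x (f x).
Proof.
move=> h; exists (fun x => proj1_sig (constructive_indefinite_description _ (h x))).
move=> x; exact: (proj2_sig (constructive_indefinite_description _ (h x))).
Qed.

Lemma ideal_sub (A : comPzRingType) (J : A -> Prop) x y :
  is_ideal J -> J x -> J y -> J (x - y).
Proof. case=> _ hD hM hx hy; rewrite -mulN1r; apply: hD => //; exact: hM. Qed.

Lemma pow_ideal (A : comPzRingType) (J : A -> Prop) :
  is_ideal J -> forall n, is_ideal (ideal_pow J n).
Proof.
move=> hJ; case: (hJ) => _ _ hJM; elim=> [|n [h0 hD hM]]; first by split.
split.
- by exists [::]; split => //; rewrite big_nil.
- move=> x y [s [hs ->]] [t [ht ->]]; exists (s ++ t); split; last by rewrite big_cat.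
  by move=> p; rewrite mem_cat => /orP [] ?; [apply: hs | apply: ht].
- move=> a x [s [hs ->]]; exists [seq (a * p.1, p.2) | p <- s]; split.
    move=> p /mapP [q qs ->] /=; have [h1 h2] := hs q qs; split => //; exact: hJM.
  rewrite big_map mulr_sumr; apply: eq_bigr => p _ /=; by rewrite mulrA.
Qed.

Lemma pow_sub (A : comPzRingType) (J : A -> Prop) n x :
  is_ideal J -> ideal_pow J n.+1 x -> J x.
Proof.
case=> h0 hD hM [s [hs ->]]; elim: s hs => [|p s IH] hs; first by rewrite big_nil.
rewrite big_cons; apply: hD.
  rewrite mulrC; apply: hM; exact: (hs p (mem_head _ _)).1.
apply: IH => q qs; apply: hs; by rewrite in_cons qs orbT.
Qed.

Lemma pow_map (A B : comPzRingType) (I : A -> Prop) (pi : {rmorphism A -> B}) :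
  forall n x, ideal_pow I n x -> ideal_pow (image_ideal pi I) n (pi x).
Proof.
elim=> [//|n IH] x [s [hs ->]]; exists (map (fun p => (pi p.1, pi p.2)) s); split.
  move=> p /mapP [q qs ->] /=; have [h1 h2] := hs q qs; split; last exact: IH.
  by exists q.1.
rewrite rmorph_sum big_map; apply: eq_bigr => p _; by rewrite rmorphM.
Qed.

Lemma pow_lift (A B : comPzRingType) (I : A -> Prop) (pi : {rmorphism A -> B}) :
  is_ideal I -> (forall y : B, exists x : A, pi x = y) ->
  forall n y, ideal_pow (image_ideal pi I) n y -> exists x, ideal_pow I n x /\ pi x = y.
Proof.
move=> hI surj; elim=> [|n IH] y.
  by move=> _; have [x hx] := surj y; exists x.
move=> [s [hs ->]]; elim: s hs => [|p s IHs] hs.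
  exists 0; split; last by rewrite big_nil rmorph0.
  by case: (pow_ideal hI n.+1).
have [[a [ha hap]] hc] := hs p (mem_head _ _).
have [d [hd hdp]] := IH _ hc.
have [x' [hx' hx'p]] : exists x', ideal_pow I n.+1 x' /\ pi x' = \sum_(q <- s) q.1 * q.2.
  apply: IHs => q qs; apply: hs; by rewrite in_cons qs orbT.
exists (a * d + x'); split.
  have [_ hD _] := pow_ideal hI n.+1; apply: hD => //.
  exists [:: (a, d)]; split; last by rewrite big_seq1.
  by move=> q; rewrite inE => /eqP -> /=.
by rewrite rmorphD rmorphM hap hdp hx'p big_cons.
Qed.

Unset Implicit Arguments.

(* B together with the surjective ring map pi : A -> B whose kernel is A_{I-tor}
   is (up to unique isomorphism) the quotient A / A_{I-tor}. *)
Theorem proposition3p10 (A B : comPzRingType) (I : A -> Prop)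
  (pi : {rmorphism A -> B}) :
  is_ideal I ->
  (forall x, itor I x -> I x -> x = 0) ->
  (forall y : B, exists x : A, pi x = y) ->
  (forall x : A, pi x = 0 <-> itor I x) ->
  (adic_separated I <-> adic_separated (image_ideal pi I)) /\
  (adic_complete I <-> adic_complete (image_ideal pi I)).
Proof.
move=> hI htor surj hker.
have hz : forall x y, I x -> I y -> pi x = pi y -> x = y.
  move=> x y hx hy hp; apply/eqP; rewrite -subr_eq0; apply/eqP.
  apply: htor; last exact: ideal_sub.
  by apply/hker; rewrite rmorphB hp subrr.
have sep : adic_separated I <-> adic_separated (image_ideal pi I).
  split.
    move=> hs y hy.
    have [x1 [h1 e1]] := pow_lift pi hI surj _ _ (hy 1%N).
    have x10 : x1 = 0.
      apply: hs; case=> [//|n].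
      have [xn [hn en]] := pow_lift pi hI surj _ _ (hy n.+1).
      suff -> : x1 = xn by [].
      by apply: hz; [exact: pow_sub h1 | exact: pow_sub hn | rewrite e1 en].
    by rewrite -e1 x10 rmorph0.
  move=> hs x hx; apply: hz; [exact: pow_sub (hx 1%N) | by case: hI | ].
  rewrite rmorph0; apply: hs => n; exact: pow_map.
split; first exact: sep.
split; last first.
  move=> [sB cB]; split; first by apply/sep.
  move=> u hu.
  have hv : adic_cauchy (image_ideal pi I) (fun m => pi (u m)).
    move=> n; have [N hN] := hu n; exists N => m k hm hk.
    rewrite -rmorphB; exact: pow_map (hN m k hm hk).
  have [l0 hl0] := cB _ hv.
  have [l el] := surj l0; subst l0.
  have [M1 hM1] := hl0 1%N.
  have [N1 hN1] := hu 1%N.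
  set P := maxn M1 N1.
  have [j0 [hj0 ej0]] := pow_lift pi hI surj _ _ (hM1 P (leq_maxl _ _)).
  exists (u P - j0); case=> [|n]; first by exists 0%N.
  have [Mn hMn] := hl0 n.+1.
  exists (maxn P Mn) => m hm.
  have hPm : (P <= m)%N by apply: leq_trans hm; apply: leq_maxl.
  have [j [hj ej]] := pow_lift pi hI surj _ _ (hMn m (leq_trans (leq_maxr _ _) hm)).
  suff -> : u m - (u P - j0) = j by [].
  have hIm : I (u m - u P).
    apply: (@pow_sub _ _ 0%N _ hI); apply: hN1; [exact: leq_trans (leq_maxr _ _) hPm | exact: leq_maxr].
  apply: hz; [ | exact: pow_sub hj | ]; last by rewrite ej !rmorphB ej0; ring.
  rewrite opprB [j0 - _]addrC addrA; case: (hI) => _ hD _; apply: hD => //; exact: (@pow_sub A I 0%N j0 hI hj0).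
move=> [sA cA]; split; first by apply/sep.
move=> v hv.
have [u eu] := @fchoice B A (fun y x => pi x = y) surj.
have [N1 hN1] := hv 1%N.
have [i hi] : exists i : nat -> A, forall m, (N1 <= m)%N -> I (i m) /\ pi (i m) = v m - v N1.
  apply: (@fchoice nat A (fun m j => (N1 <= m)%N -> I j /\ pi j = v m - v N1)) => m.
  case: (leqP N1 m) => hm.
    have [j [hj ej]] := pow_lift pi hI surj _ _ (hN1 m N1 hm (leqnn _)).
    by exists j => _; split => //; exact: pow_sub hj.
  by exists 0.
pose w m := u (v N1) + i m.
have hw : adic_cauchy I w.
  move=> n; have [Nn hNn] := hv n; exists (maxn N1 Nn) => m k hm hk.
  have hm1 := leq_trans (leq_maxl _ _) hm; have hk1 := leq_trans (leq_maxl _ _) hk.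
  have [j [hj ej]] := pow_lift pi hI surj _ _
    (hNn m k (leq_trans (leq_maxr _ _) hm) (leq_trans (leq_maxr _ _) hk)).
  case: n hNn hj ej => [//|n] hNn hj ej.
  have [him eim] := hi m hm1; have [hik eik] := hi k hk1.
  suff -> : w m - w k = j by [].
  apply: hz; [ | exact: pow_sub hj | ]; last by rewrite ej /w !rmorphB !rmorphD eim eik; ring.
  rewrite /w opprD addrACA subrr add0r; exact: ideal_sub.
have [l hl] := cA _ hw.
exists (pi l) => n; have [N hN] := hl n; exists (maxn N N1) => m hm.
have hm1 := leq_trans (leq_maxr _ _) hm.
have := @pow_map A B I pi _ _ (hN m (leq_trans (leq_maxl _ _) hm)).
rewrite rmorphB /w rmorphD (hi m hm1).2 eu; congr (ideal_pow _ _ (_ - _)); ring.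
Qed.
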